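(* For each elementary cellular automaton $F$ with rule number in $\{0, 1, 2, 4, 8, 10, 12, 19, 24, 34, 36, 38, 42, 46, 72, 76, 108, 127, 138, 200\}$, the deterministic communication complexity $D(\textsc{Pred}_{F,n})$ is $O(1)$, i.e. bounded by a constant independent of $n$.
   Context: An elementary cellular automaton (ECA) with rule number $N\in\{0,\dots,255\}$ is the map $F:\{0,1\}^{\mathbb Z}\to\{0,1\}^{\mathbb Z}$ given by $F(x)_i=f(x_{i-1},x_i,x_{i+1})$. Here the local rule $f:\{0,1\}^3\to\{0,1\}$ is determined by $N=\sum_{a,b,c\in\{0,1\}}2^{4a+2b+c}f(a,b,c)$. On a finite word of length $m\ge 3$, $F$ produces the word of length $m-2$ obtained by applying $f$ at every position whose full neighbourhood lies in the word. For $n\ge1$, $\textsc{Pred}_{F,n}:\{0,1\}^{2n+1}\to\{0,1\}$ maps a word $x=x_{-n}\cdots x_n$ to the single letter of $F^n(x)$, i.e. the state of the central cell after $n$ steps. For a function $g:X\times Y\to Z$, $D(g)$ is the minimal depth of a deterministic two-party protocol computing $g$. In such a protocol, Alice knows $x$ and Bob knows $y$. The protocol is a binary tree: each internal node is labelled by a function of Alice's input only or of Bob's input only, with values in $\{\text{left},\text{right}\}$, and each leaf is labelled by an output value. For $g:\{0,1\}^m\to Z$, set $D(g)=\max_{0\le i<m}D(g_i)$, where $g_i:\{0,1\}^i\times\{0,1\}^{m-i}\to Z$ is $g_i(x,y)=g(xy)$. *)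

(* Defs.v *)
From mathcomp Require Import all_boot.
Set Implicit Arguments. Unset Strict Implicit. Unset Printing Implicit Defensive.

Definition eca_local (N : nat) (a b c : bool) : bool :=
  odd (N %/ 2 ^ (4 * a + 2 * b + c)).

(* One step of F on a finite word: length m >= 3 gives length m - 2
   (applying f at every position with a full neighbourhood); shorter words
   give the empty word. *)
Fixpoint eca_step (N : nat) (w : seq bool) : seq bool :=
  match w with
  | a :: ((b :: c :: _) as t) => eca_local N a b c :: eca_step N t
  | _ => [::]
  end.

(* Pred_{F,n}(x) = the single letter of F^n(x), for x of length 2n+1. *)
Definition pred_eca (N n : nat) (x : seq bool) : bool :=
  head false (iter n (eca_step N) x).

(* Deterministic two-party protocol trees: internal nodes are labelled by a
   function of Alice's input or of Bob's input (true = left, false = right),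
   leaves by output values. *)
Inductive protocol (X Y Z : Type) : Type :=
| PLeaf of Z
| PAlice of (X -> bool) & protocol X Y Z & protocol X Y Z
| PBob of (Y -> bool) & protocol X Y Z & protocol X Y Z.

Fixpoint prot_eval X Y Z (P : protocol X Y Z) (x : X) (y : Y) : Z :=
  match P with
  | PLeaf z => z
  | PAlice a l r => if a x then prot_eval l x y else prot_eval r x y
  | PBob b l r => if b y then prot_eval l x y else prot_eval r x y
  end.

Fixpoint prot_depth X Y Z (P : protocol X Y Z) : nat :=
  match P with
  | PLeaf _ => 0
  | PAlice _ l r => (maxn (prot_depth l) (prot_depth r)).+1
  | PBob _ l r => (maxn (prot_depth l) (prot_depth r)).+1
  end.

Definition D_le X Y Z (g : X -> Y -> Z) (d : nat) : Prop :=
  exists P : protocol X Y Z, prot_depth P <= d /\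
    forall x y, prot_eval P x y = g x y.

(* For g on {0,1}^m: D(g) <= d iff D(g_i) <= d for all 0 <= i < m, where
   g_i(x,y) = g(xy), x in {0,1}^i, y in {0,1}^(m-i). *)
Definition D_word_le (m : nat) (g : seq bool -> bool) (d : nat) : Prop :=
  forall i : 'I_m,
    D_le (fun (x : i.-tuple bool) (y : (m - i).-tuple bool) => g (x ++ y)) d.

Definition rule_list : seq nat :=
  [:: 0; 1; 2; 4; 8; 10; 12; 19; 24; 34; 36; 38; 42; 46; 72; 76; 108; 127;
      138; 200].

(* Main.v *)
Require Import Defs.
From mathcomp Require Import all_boot.
From mathcomp Require Import zify.

Set Implicit Arguments. Unset Strict Implicit. Unset Printing Implicit Defensive.

Fixpoint allseqs (m : nat) : seq (seq bool) :=
  match m with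
  | 0 => [:: [::]]
  | m'.+1 => [seq b :: s | b <- [:: true; false], s <- allseqs m']
  end.

Lemma allseqsP m (s : seq bool) : size s = m -> s \in allseqs m.
Proof.
elim: m s => [|m IH] [|b s] //= [Hs].
rewrite mem_cat cats0; case: b; apply/orP; [left|right];
  by rewrite (mem_map (fun x y (e : _ :: x = _ :: y) => let: erefl := e in erefl)) ?IH //.
Qed.

Lemma all_allseqs m (P : pred (seq bool)) s :
  all P (allseqs m) -> size s = m -> P s.
Proof. by move=> /allP H Hs; apply: H; apply: allseqsP. Qed.

Lemma step_short N w : size w < 3 -> eca_step N w = [::].
Proof. by case: w => [|a [|b [|c t]]]. Qed.

Lemma size_step N w : size (eca_step N w) = size w - 2.
Proof.
elim: w => [|a t IH] //; case: t IH => [|b [|c t]] IH //=.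
rewrite IH /=; lia.
Qed.

Lemma drop_step N p w : drop p (eca_step N w) = eca_step N (drop p w).
Proof.
elim: p w => [|p IH] w; first by rewrite !drop0.
case: w => [|a [|b [|c t]]].
- by [].
- by [].
- rewrite /= step_short // size_drop /=; lia.
- have -> : eca_step N [:: a, b, c & t] = eca_local N a b c :: eca_step N [:: b, c & t] by [].
  by transitivity (drop p (eca_step N [:: b, c & t])); last by rewrite IH.
Qed.

Lemma take_step N k w : take k (eca_step N w) = eca_step N (take k.+2 w).
Proof.
elim: k w => [|k IH] w.
  by rewrite take0 step_short // size_take; case: ifP => // /negbT; rewrite -leqNgt.
case: w => [|a [|b [|c t]]] //.
have -> : eca_step N [:: a, b, c & t] = eca_local N a b c :: eca_step N [:: b, c & t] by [].
by transitivity (eca_local N a b c :: take k (eca_step N [:: b, c & t])); last by rewrite IH.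
Qed.

Lemma pred_S N n w : pred_eca N n.+1 w = pred_eca N n (eca_step N w).
Proof. by rewrite /pred_eca iterSr. Qed.

Record cert := Cert { c_n0 : nat; c_k : nat; c_d : nat; c_p0 : nat;
                      c_tT : seq bool; c_tF : seq bool }.

Definition idx (s : seq bool) : nat := foldl (fun a (b : bool) => a.*2 + b) 0 s.
Definition tab (c : cert) (b : bool) (s : seq bool) : bool :=
  nth false (if b then c_tT c else c_tF c) (idx s).
Definition phi (c : cert) (n : nat) (s : seq bool) := tab c (odd n) s.

Definition check_base N c :=
  all (fun w => pred_eca N (c_n0 c) w == phi c (c_n0 c) (take (c_k c) (drop (c_p0 c) w)))
      (allseqs (2 * c_n0 c + 1)).
Definition check_step N c :=
  all (fun b => all (fun u => tab c b (eca_step N u) == tab c (~~ b) (take (c_k c) (drop (c_d c) u)))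
                   (allseqs (c_k c).+2)) [:: true; false].
Definition cert_ok N c :=
  [&& c_d c <= 2, c_p0 c + c_k c <= 2 * c_n0 c + 1, check_base N c & check_step N c].

Lemma dyn N c : cert_ok N c -> forall m w, size w = 2 * (c_n0 c + m) + 1 ->
  pred_eca N (c_n0 c + m) w =
  phi c (c_n0 c + m) (take (c_k c) (drop (c_p0 c + c_d c * m) w)).
Proof.
case/and4P => Hd Hpk Hb Hs.
elim=> [|m IH] w Hw.
  rewrite addn0 muln0 addn0 in Hw *.
  by apply/eqP; apply: (all_allseqs Hb).
rewrite addnS pred_S IH; last by rewrite size_step Hw; lia.
rewrite drop_step take_step.
set u := take _ (drop _ w).
have Hu : size u = (c_k c).+2.
  rewrite /u size_take size_drop Hw.
  have Hdm : c_d c * m <= 2 * m by rewrite leq_mul2r Hd orbT.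
  by case: ifP => H; lia.
rewrite /phi.
have Hs' : all (fun u => tab c (odd (c_n0 c + m)) (eca_step N u) ==
   tab c (~~ odd (c_n0 c + m)) (take (c_k c) (drop (c_d c) u))) (allseqs (c_k c).+2).
  by move/allP: Hs => Hs; apply: Hs; case: odd.
rewrite (eqP (all_allseqs Hs' Hu)).
rewrite /= /u take_drop take_takel; last lia.
rewrite -take_drop drop_drop.
by rewrite mulnS addnCA addnC.
Qed.

Lemma send_bits X Y k (enc : X -> seq bool) (H : seq bool -> Y -> bool) :
  (forall x, size (enc x) = k) -> D_le (fun x y => H (enc x) y) k.+1.
Proof.
elim: k enc H => [|k IH] enc H Hs.
  exists (PBob (H [::]) (PLeaf _ _ true) (PLeaf _ _ false)); split => // x y /=.
  by move/eqP: (Hs x); rewrite size_eq0 => /eqP ->; case: (H [::] y).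
have Hs' x : size (behead (enc x)) = k by rewrite size_behead Hs.
have [P1 [d1 e1]] := IH (fun x => behead (enc x)) (fun s y => H (true :: s) y) Hs'.
have [P0 [d0 e0]] := IH (fun x => behead (enc x)) (fun s y => H (false :: s) y) Hs'.
exists (PAlice (fun x => head false (enc x)) P1 P0); split.
  by rewrite /= ltnS geq_max d1 d0.
move=> x y /=; rewrite e1 e0.
by case: (enc x) (Hs x) => [|[] s] //.
Qed.

Lemma D_le_mono X Y Z (g : X -> Y -> Z) d d' : d <= d' -> D_le g d -> D_le g d'.
Proof. by move=> Hd [P [HP HE]]; exists P; split => //; apply: leq_trans Hd. Qed.

Lemma D_word_le_mono m g d d' : d <= d' -> D_word_le m g d -> D_word_le m g d'.
Proof. by move=> Hd H i; apply: D_le_mono Hd (H i). Qed.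

Lemma take_drop_nth k p (w : seq bool) : p + k <= size w ->
  take k (drop p w) = [seq nth false w (p + j) | j <- iota 0 k].
Proof.
move=> Hpk; apply: (@eq_from_nth _ false).
  rewrite size_take size_drop size_map size_iota.
  by case: ifP => H; lia.
move=> j; rewrite size_take size_drop => Hj.
have Hjk : j < k by move: Hj; case: ifP => H; lia.
rewrite nth_take // nth_drop (nth_map 0) ?size_iota // nth_iota //.
Qed.

Lemma comm_window m (g G : seq bool -> bool) p k : p + k <= m ->
  (forall w, size w = m -> g w = G (take k (drop p w))) -> D_word_le m g k.+1.
Proof.
move=> Hpk Hg i.
set enc := fun (x : i.-tuple bool) => [seq nth false (x : seq bool) (p + j) | j <- iota 0 k].
set H := fun (s : seq bool) (y : (m - i).-tuple bool) =>
  G [seq (if p + j < i then nth false s j else nth false (y : seq bool) (p + j - i)) | j <- iota 0 k].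
have Henc : forall x, size (enc x) = k by move=> x; rewrite size_map size_iota.
have [P [HP HE]] := @send_bits _ _ k enc H Henc.
exists P; split => // x y; rewrite HE.
have Hsz : size (x ++ y : seq bool) = m.
  by rewrite size_cat !size_tuple; have := ltn_ord i; lia.
rewrite Hg // take_drop_nth ?Hsz // /H /enc; congr G.
symmetry; apply/eq_in_map => j; rewrite mem_iota add0n => Hj.
rewrite nth_cat size_tuple; case: ifP => // _.
by rewrite (nth_map 0) ?size_iota // nth_iota.
Qed.

Lemma cert_main N c : cert_ok N c ->
  exists C : nat, forall n : nat, 0 < n -> D_word_le (2 * n + 1) (pred_eca N n) C.
Proof.
move=> Hc; have Hc' := Hc; case/and4P: Hc' => Hd Hpk _ _.
exists (maxn (c_k c).+1 (2 * c_n0 c + 2)) => n Hn.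
case: (ltnP n (c_n0 c)) => Hn0.
  apply: (@D_word_le_mono _ _ (2 * n + 1).+1); first by rewrite leq_max; apply/orP; right; lia.
  apply: (@comm_window _ _ (pred_eca N n) 0 (2 * n + 1)) => // w Hw.
  by rewrite drop0 take_oversize ?Hw.
apply: (@D_word_le_mono _ _ (c_k c).+1); first by rewrite leq_max leqnn.
have -> : n = c_n0 c + (n - c_n0 c) by lia.
set m := n - c_n0 c.
have Hdm : c_d c * m <= 2 * m by rewrite leq_mul2r Hd orbT.
apply: (@comm_window _ _ (phi c (c_n0 c + m)) (c_p0 c + c_d c * m)); first lia.
by move=> w Hw; apply: dyn.
Qed.
Definition cert_list : seq (nat * cert) := [::
  (0, Cert 1 1 0 0 [:: false; false] [:: false; false]);
  (1, Cert 2 5 1 0 [:: true; true; false; false; false; false; false; false; false; false; false; false; false; false; false; false; true; true; false; false; false; false; false; false; false; false; false; false; false; false; false; false] [:: false; false; false; false; true; true; true; true; false; true; true; true; true; true; true; true; false; false; true; true; true; true; true; true; false; true; true; true; true; true; true; true]);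
  (2, Cert 1 3 2 0 [:: false; true; false; false; false; false; false; false] [:: false; true; false; false; false; false; false; false]);
  (4, Cert 1 3 1 0 [:: false; false; true; false; false; false; false; false] [:: false; false; true; false; false; false; false; false]);
  (8, Cert 2 1 0 0 [:: false; false] [:: false; false]);
  (10, Cert 1 3 2 0 [:: false; true; false; true; false; false; false; false] [:: false; true; false; true; false; false; false; false]);
  (12, Cert 1 2 1 0 [:: false; true; false; false] [:: false; true; false; false]);
  (19, Cert 2 5 1 0 [:: true; true; true; true; true; false; false; false; true; true; false; false; false; false; false; false; true; true; true; true; false; false; false; false; true; true; false; false; false; false; false; false] [:: false; false; false; false; false; true; true; true; false; false; true; true; true; true; true; true; false; false; false; false; true; true; true; true; false; false; true; true; true; true; true; true]);
  (24, Cert 2 5 0 0 [:: false; false; false; false; false; false; false; false; false; false; false; false; false; true; true; true; true; true; true; false; false; false; false; false; false; false; false; false; false; false; false; false] [:: false; false; false; false; false; false; false; false; false; false; false; false; false; true; true; true; true; true; true; false; false; false; false; false; false; false; false; false; false; false; false; false]);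
  (34, Cert 1 2 2 1 [:: false; true; false; false] [:: false; true; false; false]);
  (36, Cert 2 5 1 0 [:: false; false; false; false; true; false; false; false; false; false; false; false; false; false; false; false; false; false; false; false; false; false; false; false; false; false; false; true; false; false; false; false] [:: false; false; false; false; true; false; false; false; false; false; false; false; false; false; false; false; false; false; false; false; false; false; false; false; false; false; false; true; false; false; false; false]);
  (38, Cert 2 5 2 0 [:: false; true; true; false; false; false; false; false; false; true; false; false; false; true; false; false; false; true; true; false; false; false; false; false; false; true; true; false; false; true; false; false] [:: false; true; false; true; false; false; false; false; false; true; false; false; false; true; false; false; false; true; false; true; false; false; false; false; false; true; false; true; false; true; false; false]);
  (42, Cert 1 3 2 0 [:: false; true; false; true; false; true; false; false] [:: false; true; false; true; false; true; false; false]);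
  (46, Cert 2 5 2 0 [:: false; true; true; true; false; false; false; false; false; true; false; false; false; true; false; false; false; true; true; true; false; false; false; false; false; true; true; true; false; true; false; false] [:: false; true; true; true; false; false; false; false; false; true; false; false; false; true; false; false; false; true; true; true; false; false; false; false; false; true; true; true; false; true; false; false]);
  (72, Cert 2 5 1 0 [:: false; false; false; false; false; false; true; false; false; false; false; false; true; true; false; false; false; false; false; false; false; false; true; false; false; false; false; false; false; false; false; false] [:: false; false; false; false; false; false; true; false; false; false; false; false; true; true; false; false; false; false; false; false; false; false; true; false; false; false; false; false; false; false; false; false]);
  (76, Cert 1 3 1 0 [:: false; false; true; true; false; false; true; false] [:: false; false; true; true; false; false; true; false]);
  (108, Cert 3 7 1 0 [:: false; false; false; false; false; false; false; false; true; true; true; true; true; true; true; true; false; false; false; false; true; false; false; true; true; true; false; false; false; false; false; false; false; false; false; false; false; false; false; false; true; true; false; false; false; false; true; true; false; false; false; false; false; false; false; false; true; true; true; true; false; false; false; false; false; false; false; false; false; false; false; false; true; true; true; true; true; true; true; true; false; false; false; false; false; false; false; false; true; true; false; false; false; false; false; false; false; false; false; false; false; false; false; false; true; true; false; false; false; false; true; true; false; false; false; false; true; false; false; true; true; true; true; true; false; false; false; false] [:: false; false; false; false; false; false; false; false; true; true; true; true; true; true; true; true; false; false; false; false; false; false; false; false; true; true; false; false; true; true; false; false; false; false; false; false; false; false; false; false; true; true; false; false; false; false; true; true; false; false; false; false; false; false; false; false; true; true; true; true; false; false; false; false; false; false; false; false; false; false; false; false; true; true; true; true; true; true; true; true; false;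 false; false; false; false; false; false; false; true; true; false; false; true; true; false; false; false; false; false; false; false; false; false; false; true; true; false; false; false; false; true; true; false; false; false; false; false; false; false; false; true; true; true; true; false; false; false; false]);
  (127, Cert 2 5 1 0 [:: true; true; true; true; true; true; true; true; true; true; true; true; true; true; false; false; true; true; true; true; true; true; true; true; true; true; true; true; true; true; false; false] [:: false; false; false; false; false; false; false; true; false; false; false; false; false; false; true; true; false; false; false; false; false; false; false; true; false; false; false; false; true; true; true; true]);
  (138, Cert 1 3 2 0 [:: false; true; false; true; false; false; false; true] [:: false; true; false; true; false; false; false; true]);
  (200, Cert 1 3 1 0 [:: false; false; false; true; false; false; true; true] [:: false; false; false; true; false; false; true; true])].

Lemma cert_list_ok : all (fun pc => cert_ok pc.1 pc.2) cert_list.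
Proof. by vm_compute. Qed.

Lemma rule_list_eq : rule_list = map fst cert_list.
Proof. by vm_compute. Qed.

Lemma find_cert N (l : seq (nat * cert)) :
  all (fun pc => cert_ok pc.1 pc.2) l -> N \in map fst l -> exists c, cert_ok N c.
Proof.
elim: l => [|[N1 c] l IH] //= /andP [H1 Hl].
rewrite inE => /orP [/eqP -> | H]; first by exists c.
exact: IH.
Qed.

Theorem mainTheorem2 (N : nat) :
  N \in rule_list ->
  exists C : nat, forall n : nat, 0 < n ->
    D_word_le (2 * n + 1) (pred_eca N n) C.
Proof.
rewrite rule_list_eq => HN.
have [c Hc] := find_cert cert_list_ok HN.
exact: cert_main Hc.
Qed.
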